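(* For all nonnegative integers $x,y$, with $m=x+y$, $L=2^m$, $M=3^m$, $$H(\mathbf p^\star_{x,y})\ \ge\ \frac{m\,L}{M}\,(\log_2 3-1)\left[\left(\tfrac32\right)^{m}-\tfrac12\right].$$
   Context: Clumpy distribution: let $n_1\ge n_2\ge\dots\ge n_L$ be the list in which, for each $u=0,1,\dots,m$, the value $2^{m-u}$ appears exactly $\binom mu$ times (so $\sum_in_i=3^m=M$); let $\mathbf e_i^\star\in\{0,1\}^L$ have ones in its first $n_i$ positions and zeros elsewhere; $\mathbf p^\star_{x,y}=\frac1M\sum_{i=1}^L\mathbf e_i^\star$, a probability mass function on $[L]$. $H$ denotes Shannon entropy in bits. *)

(* Defs.v *)
From Stdlib Require Import Reals List.
Import ListNotations.
Open Scope R_scope.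

Fixpoint binom (n k : nat) : nat :=
  match n, k with
  | _, O => 1%nat
  | O, S _ => 0%nat
  | S n', S k' => (binom n' k' + binom n' k)%nat
  end.

(* The list (n_1,...,n_L) as a multiset: for each u = 0..m, the value
   2^(m-u) repeated binom m u times (listed in decreasing order). *)
Definition clumpy_ns (m : nat) : list nat :=
  flat_map (fun u => repeat (2 ^ (m - u))%nat (binom m u)) (seq 0 (S m)).

(* e_i^* as a 0/1 vector indexed by positions j = 0..L-1 (0-indexed):
   ones in the first n_i positions. *)
Definition e_star (ni : nat) (j : nat) : R := if Nat.ltb j ni then 1 else 0.

Definition p_star (x y : nat) (j : nat) : R :=
  let m := (x + y)%nat in
  / INR (3 ^ m) * fold_right Rplus 0 (map (fun ni => e_star ni j) (clumpy_ns m)).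

Definition log2 (t : R) : R := ln t / ln 2.

Definition entropy (L : nat) (p : nat -> R) : R :=
  - fold_right Rplus 0
      (map (fun j => if Req_EM_T (p j) 0 then 0 else p j * log2 (p j)) (seq 0 L)).

(* Main.v *)
Require Import Defs.
From Stdlib Require Import Reals List Lia Lra.
Open Scope R_scope.

Definition sumR {A} (f : A -> R) (l : list A) := fold_right Rplus 0 (map f l).

Lemma sumR_nil {A} (f : A -> R) : sumR f nil = 0.
Proof. reflexivity. Qed.
Lemma sumR_cons {A} (f : A -> R) a l : sumR f (a :: l) = f a + sumR f l.
Proof. reflexivity. Qed.

Lemma sumR_app {A} (f : A -> R) l1 l2 : sumR f (l1 ++ l2) = sumR f l1 + sumR f l2.
Proof. induction l1; simpl app; [rewrite sumR_nil; ring|]. rewrite !sumR_cons, IHl1; ring. Qed.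

Lemma sumR_flat_map {A B} (g : B -> R) (f : A -> list B) l :
  sumR g (flat_map f l) = sumR (fun x => sumR g (f x)) l.
Proof. induction l; simpl flat_map; [reflexivity|]. rewrite sumR_app, IHl, sumR_cons. reflexivity. Qed.

Lemma sumR_repeat {A} (f : A -> R) v k : sumR f (repeat v k) = INR k * f v.
Proof. induction k; [simpl repeat; rewrite sumR_nil; simpl INR; ring|]. rewrite S_INR. simpl repeat. rewrite sumR_cons, IHk; ring. Qed.

Lemma sumR_le {A} (f g : A -> R) l : (forall x, f x <= g x) -> sumR f l <= sumR g l.
Proof. intro H; induction l; [rewrite !sumR_nil; lra|]. rewrite !sumR_cons. specialize (H a); lra. Qed.

Lemma sumR_plus {A} (f g : A -> R) l : sumR (fun x => f x + g x) l = sumR f l + sumR g l.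
Proof. induction l; [rewrite !sumR_nil; ring|]. rewrite !sumR_cons, IHl; ring. Qed.

Lemma sumR_scal {A} c (f : A -> R) l : sumR (fun x => c * f x) l = c * sumR f l.
Proof. induction l; [rewrite !sumR_nil; ring|]. rewrite !sumR_cons, IHl; ring. Qed.

Lemma sumR_zero {A} (l : list A) : sumR (fun _ => 0) l = 0.
Proof. induction l; [reflexivity|]. rewrite sumR_cons, IHl; ring. Qed.

Lemma sumR_ext_in {A} (f g : A -> R) l : (forall x, In x l -> f x = g x) -> sumR f l = sumR g l.
Proof. intro H; induction l; [reflexivity|]. rewrite !sumR_cons, IHl, H; simpl; auto; intros; apply H; simpl; auto. Qed.

Lemma sumR_swap {A B} (g : A -> B -> R) la lb :
  sumR (fun a => sumR (fun b => g a b) lb) la = sumR (fun b => sumR (fun a => g a b) la) lb.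
Proof.
  induction la.
  - rewrite sumR_nil. rewrite (sumR_ext_in _ (fun _ => 0)); [now rewrite sumR_zero|].
    intros; reflexivity.
  - rewrite sumR_cons, IHla, <- sumR_plus. apply sumR_ext_in. intros; reflexivity.
Qed.

Lemma sumR_seq f n : sumR f (seq 0 (S n)) = sum_f_R0 f n.
Proof.
  induction n; [simpl; unfold sumR; simpl; ring|].
  rewrite seq_S, sumR_app, IHn. simpl. unfold sumR; simpl. ring.
Qed.

Lemma sum_estar ni L : sumR (fun j => e_star ni j) (seq 0 L) = INR (Nat.min ni L).
Proof.
  induction L; [rewrite Nat.min_0_r; reflexivity|].
  rewrite seq_S, sumR_app, IHL. simpl (0 + L)%nat. rewrite sumR_cons, sumR_nil.
  unfold e_star. destruct (Nat.ltb_spec L ni).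
  - rewrite Nat.min_r by lia. rewrite Nat.min_r by lia. rewrite S_INR; ring.
  - rewrite Nat.min_l by lia. rewrite Nat.min_l by lia. ring.
Qed.

Lemma binom_gt n k : (n < k)%nat -> binom n k = 0%nat.
Proof.
  revert k; induction n; intros k Hk; destruct k; simpl; try lia.
  rewrite !IHn by lia. reflexivity.
Qed.

Lemma C_nn n : C n n = 1.
Proof. unfold C. rewrite Nat.sub_diag. simpl. field. apply INR_fact_neq_0. Qed.

Lemma C_n0 n : C n 0 = 1.
Proof. unfold C. rewrite Nat.sub_0_r. simpl. field. apply INR_fact_neq_0. Qed.

Lemma binom_C n k : (k <= n)%nat -> INR (binom n k) = C n k.
Proof.
  revert k; induction n; intros k Hk.
  - assert (k = 0%nat) by lia; subst. simpl. rewrite C_n0; reflexivity.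
  - destruct k; [simpl; rewrite C_n0; reflexivity|].
    simpl binom. rewrite plus_INR.
    destruct (Nat.eq_dec k n).
    + subst. rewrite (binom_gt n (S n)) by lia. rewrite IHn by lia. rewrite !C_nn. simpl; ring.
    + rewrite !IHn by lia. apply pascal. lia.
Qed.

Lemma ln_le' x y : 0 < x -> x <= y -> ln x <= ln y.
Proof. intros Hx Hy. destruct (Rle_lt_or_eq_dec _ _ Hy) as [h|h].
  - left; apply ln_increasing; auto.
  - subst; lra. Qed.

Lemma INR3 m : INR (3 ^ m) = 3 ^ m.
Proof. rewrite pow_INR. f_equal. all: simpl; try ring. Qed.
Lemma INR2 m : INR (2 ^ m) = 2 ^ m.
Proof. rewrite pow_INR. f_equal. all: simpl; try ring. Qed.

Theorem mainTheorem11 (x y : nat) :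
  let m := (x + y)%nat in
  let L := (2 ^ m)%nat in
  let M := (3 ^ m)%nat in
  entropy L (p_star x y) >=
    INR m * INR L / INR M * (log2 3 - 1) * ((3 / 2) ^ m - 1 / 2).
Proof.
  intros m L M.
  set (ns := clumpy_ns m).
  assert (HN : sumR (fun _ => 1) ns = 2 ^ m).
  { unfold ns, clumpy_ns. rewrite sumR_flat_map.
    rewrite (sumR_ext_in _ (fun u => C m u)).
    - rewrite sumR_seq. replace 2 with (1+1) by ring. rewrite binomial.
      apply sum_eq; intros; rewrite !pow1; ring.
    - intros u Hu. apply in_seq in Hu. rewrite sumR_repeat, binom_C by lia. ring. }
  assert (HS : sumR INR ns = 3 ^ m).
  { unfold ns, clumpy_ns. rewrite sumR_flat_map.
    rewrite (sumR_ext_in _ (fun u => C m u * 1 ^ u * 2 ^ (m - u))).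
    - rewrite sumR_seq. replace 3 with (1+2) by ring. rewrite binomial. reflexivity.
    - intros u Hu. apply in_seq in Hu. rewrite sumR_repeat, binom_C by lia.
      rewrite INR2, pow1. ring. }
  assert (Hle : forall ni, In ni ns -> (ni <= 2 ^ m)%nat).
  { intros ni Hi. unfold ns, clumpy_ns in Hi. apply in_flat_map in Hi.
    destruct Hi as [u [Hu Hr]]. apply repeat_spec in Hr. subst.
    apply Nat.pow_le_mono_r; lia. }
  unfold entropy.
  set (c := fun j => sumR (fun ni => e_star ni j) ns).
  assert (Hp : forall j, p_star x y j = / INR M * c j) by (intros; reflexivity).
  assert (Hc0 : forall j, 0 <= c j).
  { intro j. unfold c. rewrite <- (sumR_zero ns). apply sumR_le.
    intros ni; unfold e_star; destruct (Nat.ltb j ni); lra. }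
  assert (Hc1 : forall j, c j <= 2 ^ m).
  { intro j. unfold c. rewrite <- HN. apply sumR_le.
    intros ni; unfold e_star; destruct (Nat.ltb j ni); lra. }
  assert (Hsum : sumR c (seq 0 L) = 3 ^ m).
  { unfold c. rewrite <- (sumR_swap (fun a b => e_star a b)).
    rewrite <- HS. apply sumR_ext_in. intros ni Hi.
    rewrite sum_estar. rewrite Nat.min_l by (apply Hle; auto). reflexivity. }
  assert (HM : INR M = 3 ^ m) by apply INR3.
  assert (HL : INR L = 2 ^ m) by apply INR2.
  assert (HP : 0 < 2 ^ m) by (apply pow_lt; lra).
  assert (HQ : 0 < 3 ^ m) by (apply pow_lt; lra).
  assert (Hln2 : 0 < ln 2) by (pose proof ln_lt_2; lra).
  set (K := (ln (3 ^ m) - ln (2 ^ m)) / ln 2).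
  assert (Hterm : forall j, (if Req_EM_T (p_star x y j) 0 then 0
                             else p_star x y j * log2 (p_star x y j))
                            <= -(K * (/ INR M * c j))).
  { intro j. rewrite Hp. destruct (Req_EM_T (/ INR M * c j) 0) as [e|n].
    - rewrite e; lra.
    - rewrite HM in *. set (p := / 3 ^ m * c j) in *.
      assert (Hp0 : 0 < p).
      { assert (0 <= p) by (unfold p; apply Rmult_le_pos; [left; apply Rinv_0_lt_compat; lra| apply Hc0]).
        lra. }
      assert (Hp1 : p <= 2 ^ m * / 3 ^ m).
      { unfold p. rewrite Rmult_comm. apply Rmult_le_compat_r; [left; apply Rinv_0_lt_compat; lra| apply Hc1]. }
      assert (Hlp : ln p <= ln (2 ^ m) - ln (3 ^ m)).
      { unfold Rminus. rewrite <- ln_Rinv by lra. rewrite <- ln_mult by (try apply Rinv_0_lt_compat; lra).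
        apply ln_le'; auto. }
      assert (log2 p <= - K).
      { unfold log2. replace (-K) with ((ln (2 ^ m) - ln (3 ^ m)) * / ln 2) by (unfold K; field; lra).
        unfold Rdiv. apply Rmult_le_compat_r; [left; apply Rinv_0_lt_compat; lra| lra]. }
      replace (-(K * p)) with (p * (-K)) by ring.
      apply Rmult_le_compat_l; lra. }
  assert (Hent : - sumR (fun j => if Req_EM_T (p_star x y j) 0 then 0
                             else p_star x y j * log2 (p_star x y j)) (seq 0 L) >= K).
  { assert (H1 := sumR_le _ _ (seq 0 L) Hterm).
    assert (H2 : sumR (fun j => - (K * (/ INR M * c j))) (seq 0 L) = - K).
    { rewrite (sumR_ext_in _ (fun j => (- K * / INR M) * c j)) by (intros; ring).
      rewrite sumR_scal, Hsum, HM. field. lra. }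
    lra. }
  change (- fold_right Rplus 0
      (map (fun j => if Req_EM_T (p_star x y j) 0 then 0 else p_star x y j * log2 (p_star x y j)) (seq 0 L))
    >= INR m * INR L / INR M * (log2 3 - 1) * ((3 / 2) ^ m - 1 / 2)).
  fold (sumR (fun j => if Req_EM_T (p_star x y j) 0 then 0
                             else p_star x y j * log2 (p_star x y j)) (seq 0 L)).
  apply Rge_trans with K; [exact Hent|].
  assert (Ha : 0 <= log2 3 - 1).
  { unfold log2. assert (ln 2 <= ln 3) by (apply ln_le'; lra).
    apply (Rmult_le_reg_r (ln 2)); [lra|]. field_simplify; lra. }
  assert (HK : K = INR m * (log2 3 - 1)).
  { unfold K, log2. rewrite !ln_pow by lra. field. lra. }
  assert (Ht : (3 / 2) ^ m = 3 ^ m / 2 ^ m).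
  { unfold Rdiv. rewrite Rpow_mult_distr, pow_inv. reflexivity. }
  rewrite HK, HM, HL, Ht.
  set (a := log2 3 - 1) in *.
  replace (INR m * 2 ^ m / 3 ^ m * a * (3 ^ m / 2 ^ m - 1 / 2))
    with (INR m * a - INR m * a * (2 ^ m / (2 * 3 ^ m))) by (field; lra).
  assert (0 <= INR m * a * (2 ^ m / (2 * 3 ^ m))).
  { apply Rmult_le_pos; [apply Rmult_le_pos; [apply pos_INR| exact Ha]|].
    unfold Rdiv; apply Rmult_le_pos; [lra| left; apply Rinv_0_lt_compat; lra]. }
  lra.
Qed.
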